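(* Work on the jet space with coordinates $t\in\mathbb R$, $\mathbf x,\mathbf v,\mathbf v',\mathbf v''\in\mathbb R^3$, together with parameters $s_0\in\mathbb R$, $\mathbf s\in\mathbb R^3$, and a constant $m$. Let $\cdot$ and $\times$ be the Euclidean dot and cross products on $\mathbb R^3$. Put $$D=(1+\mathbf v\cdot\mathbf v)(s_0^2+\mathbf s\cdot\mathbf s)-(s_0+\mathbf s\cdot\mathbf v)^2 ,$$ and define $$\mathbf E=\frac{\mathbf v''\times(\mathbf s-s_0\mathbf v)}{D^{3/2}}-3\,\frac{(s_0^2+\mathbf s\cdot\mathbf s)\,\mathbf v'\cdot\mathbf v-(s_0+\mathbf s\cdot\mathbf v)\,\mathbf s\cdot\mathbf v'}{D^{5/2}}\,\mathbf v'\times(\mathbf s-s_0\mathbf v)+m\,\frac{(1+\mathbf v\cdot\mathbf v)\mathbf v'-(\mathbf v'\cdot\mathbf v)\mathbf v}{(1+\mathbf v\cdot\mathbf v)^{3/2}(s_0^2+\mathbf s\cdot\mathbf s)^{3/2}}.$$ For arbitrary $\mathbf n,\mathbf q\in\mathbb R^3$, let $\xi_3$ be the vector field $$\begin{aligned}\xi_3={}&-(\mathbf q\cdot\mathbf s)\partial_{s_0}+\big(s_0\mathbf q+\mathbf n\times\mathbf s\big)\cdot\partial_{\mathbf s}-(\mathbf q\cdot\mathbf x)\partial_t+\big(t\mathbf q+\mathbf n\times\mathbf x\big)\cdot\partial_{\mathbf x}\\&+\big(\mathbf q+(\mathbf q\cdot\mathbf v)\mathbf v+\mathbf n\times\mathbf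 v\big)\cdot\partial_{\mathbf v}+\big(2(\mathbf q\cdot\mathbf v)\mathbf v'+(\mathbf q\cdot\mathbf v')\mathbf v+\mathbf n\times\mathbf v'\big)\cdot\partial_{\mathbf v'}\\&+\big(3(\mathbf q\cdot\mathbf v)\mathbf v''+3(\mathbf q\cdot\mathbf v')\mathbf v'+(\mathbf q\cdot\mathbf v'')\mathbf v+\mathbf n\times\mathbf v''\big)\cdot\partial_{\mathbf v''}.\end{aligned}$$ This is the prolongation to $J_3(\mathbb R;\mathbb R^3)$ of the infinitesimal rotation of $\mathbb R^4=\{(t,\mathbf x)\}$ with parameters $\mathbf n,\mathbf q$, extended to act on $(s_0,\mathbf s)$ as a four-vector. Here $\mathbf a\cdot\partial_{\mathbf x}=\sum_a a^a\partial_{x^a}$. Then, applying $\xi_3$ componentwise to $\mathbf E$, $$\xi_3(\mathbf E)=\mathbf n\times\mathbf E+(\mathbf q\cdot\mathbf v)\,\mathbf E-(\mathbf v\cdot\mathbf E)\,\mathbf q .$$ In particular, the third-order system $\mathbf E=0$ is invariant under these (orthogonal) transformations.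
   Context: $\mathbf E$ is the parametrization, with respect to $t=x^0$, of the four-dimensional Euler–Poisson expression $\boldsymbol{\mathcal E}$ of the companion Assertion 1. It is defined on the open set where $D>0$ and $s_0^2+\mathbf s\cdot\mathbf s>0$. *)

(* Defs.v *)
From Stdlib Require Import Reals.
Open Scope R_scope.

Record V3 := mkV3 { vx : R ; vy : R ; vz : R }.

Definition vadd (a b : V3) : V3 := mkV3 (vx a + vx b) (vy a + vy b) (vz a + vz b).
Definition vsub (a b : V3) : V3 := mkV3 (vx a - vx b) (vy a - vy b) (vz a - vz b).
Definition vscale (k : R) (a : V3) : V3 := mkV3 (k * vx a) (k * vy a) (k * vz a).
Definition dot (a b : V3) : R := vx a * vx b + vy a * vy b + vz a * vz b.
Definition cross (a b : V3) : V3 :=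
  mkV3 (vy a * vz b - vz a * vy b)
       (vz a * vx b - vx a * vz b)
       (vx a * vy b - vy a * vx b).

(* Points of J_3(R;R^3) x (parameter space (s0, s)):
   coordinates t, x, v, v', v'', s0, s. *)
Record Pt := mkPt { pt : R ; px : V3 ; pv : V3 ; pv1 : V3 ; pv2 : V3 ;
                    ps0 : R ; ps : V3 }.

Definition padd (p w : Pt) : Pt :=
  mkPt (pt p + pt w) (vadd (px p) (px w)) (vadd (pv p) (pv w))
       (vadd (pv1 p) (pv1 w)) (vadd (pv2 p) (pv2 w))
       (ps0 p + ps0 w) (vadd (ps p) (ps w)).
Definition pscale (k : R) (w : Pt) : Pt :=
  mkPt (k * pt w) (vscale k (px w)) (vscale k (pv w)) (vscale k (pv1 w))
       (vscale k (pv2 w)) (k * ps0 w) (vscale k (ps w)).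

Definition Dfun (p : Pt) : R :=
  (1 + dot (pv p) (pv p)) * (ps0 p ^ 2 + dot (ps p) (ps p))
  - (ps0 p + dot (ps p) (pv p)) ^ 2.

(* The expression E (real powers via Rpower, used only where the base is > 0) *)
Definition Efun (m : R) (p : Pt) : V3 :=
  let v := pv p in let v1 := pv1 p in let v2 := pv2 p in
  let s0 := ps0 p in let s := ps p in
  let D := Dfun p in
  let w := vsub s (vscale s0 v) in
  let S := s0 ^ 2 + dot s s in
  vadd (vadd (vscale (/ Rpower D (3/2)) (cross v2 w))
             (vscale (- (3 * ((S * dot v1 v - (s0 + dot s v) * dot s v1)
                               / Rpower D (5/2)))) (cross v1 w)))
       (vscale (m / (Rpower (1 + dot v v) (3/2) * Rpower S (3/2)))
               (vsub (vscale (1 + dot v v) v1) (vscale (dot v1 v) v))).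

Definition xi3 (n q : V3) (p : Pt) : Pt :=
  let x := px p in let v := pv p in let v1 := pv1 p in let v2 := pv2 p in
  let s0 := ps0 p in let s := ps p in let t := pt p in
  mkPt (- dot q x)
       (vadd (vscale t q) (cross n x))
       (vadd (vadd q (vscale (dot q v) v)) (cross n v))
       (vadd (vadd (vscale (2 * dot q v) v1) (vscale (dot q v1) v)) (cross n v1))
       (vadd (vadd (vadd (vscale (3 * dot q v) v2) (vscale (3 * dot q v1) v1))
                   (vscale (dot q v2) v)) (cross n v2))
       (- dot q s)
       (vadd (vscale s0 q) (cross n s)).

Definition vf_apply_is (f : Pt -> R) (p w : Pt) (l : R) : Prop :=
  derivable_pt_lim (fun eps => f (padd p (pscale eps w))) 0 l.

(* Main.v *)
Require Import Defs.
From Coquelicot Require Import Coquelicot.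
From Stdlib Require Import Reals Lra.
Open Scope R_scope.

Lemma pt0 (p w : Pt) : padd p (pscale 0 w) = p.
Proof.
  destruct p as [t [] [] [] [] s0 []]; destruct w as [t' [] [] [] [] s0' []];
  unfold padd, pscale, vadd, vscale; simpl; f_equal; try f_equal; ring.
Qed.

Lemma vf_ext (f g : Pt -> R) p w l :
  (forall z, f z = g z) -> vf_apply_is f p w l -> vf_apply_is g p w l.
Proof.
  intros H H1. unfold vf_apply_is in *. apply is_derive_Reals.
  apply is_derive_Reals in H1. eapply is_derive_ext; [|exact H1].
  intro; simpl; apply H.
Qed.

Lemma vf_eq (f : Pt -> R) p w l l' :
  vf_apply_is f p w l -> l = l' -> vf_apply_is f p w l'.
Proof. intros H ->; exact H. Qed.

Lemma vf_aff (f : Pt -> R) p w a b :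
  (forall e, f (padd p (pscale e w)) = a + e * b) -> vf_apply_is f p w b.
Proof.
  intros H. unfold vf_apply_is. apply is_derive_Reals.
  eapply is_derive_ext. { intro e. symmetry. apply H. }
  auto_derive; auto; ring.
Qed.

Lemma vf_const (c : R) p w : vf_apply_is (fun _ => c) p w 0.
Proof. apply vf_aff with c. intros; ring. Qed.

Lemma vf_plus (f g : Pt -> R) p w a b :
  vf_apply_is f p w a -> vf_apply_is g p w b ->
  vf_apply_is (fun z => f z + g z) p w (a + b).
Proof.
  unfold vf_apply_is; intros H1 H2; apply is_derive_Reals;
  apply is_derive_Reals in H1; apply is_derive_Reals in H2.
  apply (is_derive_plus _ _ _ _ _ H1 H2).
Qed.

Lemma vf_opp (f : Pt -> R) p w a :
  vf_apply_is f p w a -> vf_apply_is (fun z => - f z) p w (- a).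
Proof.
  unfold vf_apply_is; intros H1; apply is_derive_Reals;
  apply is_derive_Reals in H1.
  apply (is_derive_opp _ _ _ H1).
Qed.

Lemma vf_minus (f g : Pt -> R) p w a b :
  vf_apply_is f p w a -> vf_apply_is g p w b ->
  vf_apply_is (fun z => f z - g z) p w (a - b).
Proof.
  unfold vf_apply_is; intros H1 H2; apply is_derive_Reals;
  apply is_derive_Reals in H1; apply is_derive_Reals in H2.
  apply (is_derive_minus _ _ _ _ _ H1 H2).
Qed.

Lemma vf_mult (f g : Pt -> R) p w a b :
  vf_apply_is f p w a -> vf_apply_is g p w b ->
  vf_apply_is (fun z => f z * g z) p w (a * g p + f p * b).
Proof.
  unfold vf_apply_is; intros H1 H2; apply is_derive_Reals;
  apply is_derive_Reals in H1; apply is_derive_Reals in H2.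
  pose proof (is_derive_mult _ _ _ _ _ H1 H2 ltac:(intros; apply Rmult_comm)) as H.
  simpl in H. rewrite !pt0 in H. exact H.
Qed.

Lemma vf_invpow (f : Pt -> R) p w l a :
  0 < f p -> vf_apply_is f p w l ->
  vf_apply_is (fun z => / Rpower (f z) a) p w (- a * l / f p * / Rpower (f p) a).
Proof.
  unfold vf_apply_is; intros Hp H1; apply is_derive_Reals;
  apply is_derive_Reals in H1.
  assert (Hp' : 0 < f (padd p (pscale 0 w))) by (rewrite pt0; exact Hp).
  set (X := f (padd p (pscale 0 w))) in *.
  assert (Hg : is_derive (fun y => Rpower y a) X (a * Rpower X (a - 1))).
  { apply is_derive_Reals. apply derivable_pt_lim_power. exact Hp'. }
  pose proof (is_derive_comp (fun y => Rpower y a) (fun eps => f (padd p (pscale eps w))) 0 _ _ Hg H1) as Hc.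
  assert (HX : Rpower X a <> 0) by (unfold Rpower; apply Rgt_not_eq, exp_pos).
  pose proof (is_derive_inv _ _ _ Hc HX) as Hi.
  simpl in Hi. replace (f p) with X by (unfold X; rewrite pt0; reflexivity).
  replace (- a * l / X * / Rpower X a) with (- scal l (a * Rpower X (a - 1)) / Rpower X a ^ 2).
  { eapply is_derive_ext; [|exact Hi]. intro; reflexivity. }
  change (scal l (a * Rpower X (a - 1))) with (l * (a * Rpower X (a - 1))).
  replace (a - 1) with (a + Ropp 1) by ring. rewrite Rpower_plus, Rpower_Ropp, Rpower_1 by exact Hp'.
  field. split; [exact HX| lra].
Qed.

Definition VD (F : Pt -> V3) p w (L : V3) :=
  vf_apply_is (fun z => vx (F z)) p w (vx L) /\
  vf_apply_is (fun z => vy (F z)) p w (vy L) /\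
  vf_apply_is (fun z => vz (F z)) p w (vz L).

Lemma VD_add F G p w L1 L2 : VD F p w L1 -> VD G p w L2 ->
  VD (fun z => vadd (F z) (G z)) p w (vadd L1 L2).
Proof. intros [? [? ?]] [? [? ?]]; repeat split; simpl; apply vf_plus; auto. Qed.

Lemma VD_sub F G p w L1 L2 : VD F p w L1 -> VD G p w L2 ->
  VD (fun z => vsub (F z) (G z)) p w (vsub L1 L2).
Proof. intros [? [? ?]] [? [? ?]]; repeat split; simpl; apply vf_minus; auto. Qed.

Lemma VD_scale f F p w l L : vf_apply_is f p w l -> VD F p w L ->
  VD (fun z => vscale (f z) (F z)) p w (vadd (vscale l (F p)) (vscale (f p) L)).
Proof. intros ? [? [? ?]]; repeat split; simpl; apply vf_mult; auto. Qed.

Lemma VD_cross F G p w L1 L2 : VD F p w L1 -> VD G p w L2 ->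
  VD (fun z => cross (F z) (G z)) p w (vadd (cross L1 (G p)) (cross (F p) L2)).
Proof.
  intros [? [? ?]] [? [? ?]]; repeat split; simpl;
  (eapply vf_eq; [apply vf_minus; apply vf_mult; eauto|]); cbv beta; ring.
Qed.

Lemma vf_dot F G p w L1 L2 : VD F p w L1 -> VD G p w L2 ->
  vf_apply_is (fun z => dot (F z) (G z)) p w (dot L1 (G p) + dot (F p) L2).
Proof.
  intros [? [? ?]] [? [? ?]]; unfold dot;
  (eapply vf_eq; [repeat apply vf_plus; apply vf_mult; eauto|]); cbv beta; ring.
Qed.

Lemma VD_pv p w : VD pv p w (pv w).
Proof. repeat split; eapply vf_aff; intros; simpl; reflexivity. Qed.
Lemma VD_pv1 p w : VD pv1 p w (pv1 w).
Proof. repeat split; eapply vf_aff; intros; simpl; reflexivity. Qed.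
Lemma VD_pv2 p w : VD pv2 p w (pv2 w).
Proof. repeat split; eapply vf_aff; intros; simpl; reflexivity. Qed.
Lemma VD_ps p w : VD ps p w (ps w).
Proof. repeat split; eapply vf_aff; intros; simpl; reflexivity. Qed.
Lemma vf_ps0 p w : vf_apply_is ps0 p w (ps0 w).
Proof. eapply vf_aff; intros; simpl; reflexivity. Qed.

Ltac vfauto := repeat first [ apply vf_minus | apply vf_plus | apply vf_mult | apply vf_opp
  | apply vf_dot | apply VD_pv | apply VD_pv1 | apply VD_pv2 | apply VD_ps | apply vf_ps0
  | apply vf_const ].

Ltac crunch p n q :=
  destruct p as [t [x1 x2 x3] [a1 a2 a3] [b1 b2 b3] [c1 c2 c3] s0 [s1 s2 s3]];
  destruct n as [n1 n2 n3]; destruct q as [q1 q2 q3];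
  unfold xi3, Dfun, dot, cross, vadd, vsub, vscale in *; simpl in *.

Lemma dD n q p : vf_apply_is Dfun p (xi3 n q p) (2 * dot q (pv p) * Dfun p).
Proof.
  apply vf_ext with (f := fun z => (1 + dot (pv z) (pv z)) * (ps0 z * ps0 z + dot (ps z) (ps z))
     - (ps0 z + dot (ps z) (pv z)) * (ps0 z + dot (ps z) (pv z))).
  { intro; unfold Dfun; ring. }
  eapply vf_eq. { vfauto. }
  crunch p n q. ring.
Qed.

Lemma dA n q p : vf_apply_is (fun z => 1 + dot (pv z) (pv z)) p (xi3 n q p)
   (2 * dot q (pv p) * (1 + dot (pv p) (pv p))).
Proof. eapply vf_eq. { vfauto. } crunch p n q. ring. Qed.

Lemma dS n q p : vf_apply_is (fun z => ps0 z ^ 2 + dot (ps z) (ps z)) p (xi3 n q p) 0.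
Proof.
  apply vf_ext with (f := fun z => ps0 z * ps0 z + dot (ps z) (ps z)).
  { intro; ring. }
  eapply vf_eq. { vfauto. } crunch p n q. ring.
Qed.

Lemma diP n q p a : 0 < Dfun p ->
  vf_apply_is (fun z => / Rpower (Dfun z) a) p (xi3 n q p)
    (- (2 * a) * dot q (pv p) * / Rpower (Dfun p) a).
Proof.
  intro hD. eapply vf_eq. { apply vf_invpow; [exact hD| apply dD]. }
  field; repeat split; try lra; unfold Rpower; apply Rgt_not_eq, exp_pos.
Qed.

Lemma dM m n q p : 0 < ps0 p ^ 2 + dot (ps p) (ps p) ->
  vf_apply_is (fun z => m / (Rpower (1 + dot (pv z) (pv z)) (3/2) *
        Rpower (ps0 z ^ 2 + dot (ps z) (ps z)) (3/2))) p (xi3 n q p)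
    (- 3 * dot q (pv p) * (m / (Rpower (1 + dot (pv p) (pv p)) (3/2) *
        Rpower (ps0 p ^ 2 + dot (ps p) (ps p)) (3/2)))).
Proof.
  intro hS.
  assert (hA : 0 < 1 + dot (pv p) (pv p)).
  { unfold dot. destruct (pv p) as [u1 u2 u3]; simpl. pose proof (Rle_0_sqr u1); pose proof (Rle_0_sqr u2); pose proof (Rle_0_sqr u3); unfold Rsqr in *; lra. }
  apply vf_ext with (f := fun z => m * (/ Rpower (1 + dot (pv z) (pv z)) (3/2) *
        / Rpower (ps0 z ^ 2 + dot (ps z) (ps z)) (3/2))).
  { intro; unfold Rdiv; rewrite Rinv_mult; ring. }
  eapply vf_eq.
  { apply vf_mult; [apply vf_const|]. apply vf_mult; apply vf_invpow; auto using dA, dS. }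
  unfold Rdiv; rewrite Rinv_mult. field; repeat split; try lra; unfold Rpower; apply Rgt_not_eq, exp_pos.
Qed.

Definition Bf (z : Pt) : R :=
  (ps0 z ^ 2 + dot (ps z) (ps z)) * dot (pv1 z) (pv z)
  - (ps0 z + dot (ps z) (pv z)) * dot (ps z) (pv1 z).

Lemma V3ext (a b : V3) : vx a = vx b -> vy a = vy b -> vz a = vz b -> a = b.
Proof. destruct a, b; simpl; intros -> -> ->; reflexivity. Qed.

Lemma VD_eq F p w L L' : VD F p w L -> L = L' -> VD F p w L'.
Proof. intros H ->; exact H. Qed.

Theorem mainTheorem3 (m : R) (n q : V3) (p : Pt)
  (hD : 0 < Dfun p) (hS : 0 < ps0 p ^ 2 + dot (ps p) (ps p)) :
  let rhs := vsub (vadd (cross n (Efun m p)) (vscale (dot q (pv p)) (Efun m p)))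
                  (vscale (dot (pv p) (Efun m p)) q) in
  vf_apply_is (fun z => vx (Efun m z)) p (xi3 n q p) (vx rhs) /\
  vf_apply_is (fun z => vy (Efun m z)) p (xi3 n q p) (vy rhs) /\
  vf_apply_is (fun z => vz (Efun m z)) p (xi3 n q p) (vz rhs).
Proof.
  intro rhs.
  change (VD (fun z => vadd (vadd (vscale (/ Rpower (Dfun z) (3/2))
              (cross (pv2 z) (vsub (ps z) (vscale (ps0 z) (pv z)))))
          (vscale (- (3 * (Bf z * / Rpower (Dfun z) (5/2))))
              (cross (pv1 z) (vsub (ps z) (vscale (ps0 z) (pv z))))))
        (vscale (m / (Rpower (1 + dot (pv z) (pv z)) (3/2) *
                      Rpower (ps0 z ^ 2 + dot (ps z) (ps z)) (3/2)))
           (vsub (vscale (1 + dot (pv z) (pv z)) (pv1 z)) (vscale (dot (pv1 z) (pv z)) (pv z)))))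
     p (xi3 n q p) rhs).
  assert (Hw : VD (fun z => vsub (ps z) (vscale (ps0 z) (pv z))) p (xi3 n q p)
     (vsub (ps (xi3 n q p)) (vadd (vscale (ps0 (xi3 n q p)) (pv p)) (vscale (ps0 p) (pv (xi3 n q p)))))).
  { apply VD_sub; [apply VD_ps| apply VD_scale; [apply vf_ps0|apply VD_pv]]. }
  eapply VD_eq.
  { apply VD_add; [apply VD_add|].
    - apply VD_scale; [apply diP; exact hD| apply VD_cross; [apply VD_pv2| exact Hw]].
    - apply VD_scale.
      { apply vf_opp, vf_mult; [apply vf_const|]. apply vf_mult;
        [unfold Bf; apply vf_minus; apply vf_mult; try apply dS; vfauto | apply diP; exact hD]. }
      apply VD_cross; [apply VD_pv1| exact Hw].
    - apply VD_scale; [apply dM; exact hS|].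
      apply VD_sub; [apply VD_scale; [apply dA|apply VD_pv1] |
        apply VD_scale; [apply vf_dot; [apply VD_pv1|apply VD_pv]| apply VD_pv]]. }
  unfold rhs; clear rhs. cbv beta. unfold Efun. cbv zeta.
  assert (H5 : Rpower (Dfun p) (5/2) = Dfun p * Rpower (Dfun p) (3/2)).
  { replace (5/2) with (1 + 3/2) by field. rewrite Rpower_plus, Rpower_1; auto. }
  rewrite !H5.
  set (M := m / (Rpower (1 + dot (pv p) (pv p)) (3/2) *
                      Rpower (ps0 p ^ 2 + dot (ps p) (ps p)) (3/2))).
  assert (HP : Rpower (Dfun p) (3/2) <> 0) by (unfold Rpower; apply Rgt_not_eq, exp_pos).
  set (P := Rpower (Dfun p) (3/2)) in *.
  unfold Rdiv. rewrite !Rinv_mult.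
  set (Y := / Dfun p * / P).
  assert (HX : / P = Dfun p * Y) by (unfold Y; field; split; lra).
  rewrite HX. clearbody Y M. clear HX HP H5 Hw hS P. unfold Bf.
  destruct p as [t [x1 x2 x3] [a1 a2 a3] [b1 b2 b3] [c1 c2 c3] s0 [s1 s2 s3]];
  destruct n as [n1 n2 n3]; destruct q as [q1 q2 q3].
  apply V3ext;
  cbv [Dfun dot cross vadd vsub vscale xi3 vx vy vz pv pv1 pv2 ps ps0 px pt pow]. all: field.
Qed.
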